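(* Let $\Gamma$ be a $G$-distance-transitive graph of diameter $d$ with intersection array $\{b_0,\dots,b_{d-1};c_1,\dots,c_d\}$, and let $X,Y$ be vertices with $d(X,Y)=d$. Then $\Gamma$ is $G$-geodesic-transitive if and only if the stabilizer in $G$ of the ordered pair $(X,Y)$ acts transitively on the set $\mathcal{L}_{XY}$ of geodesics from $X$ to $Y$. Moreover, $|\mathcal{L}_{XY}|=c_1c_2\cdots c_d$.
   Context: All graphs are finite, simple, undirected, connected. A geodesic of length $\ell$ from $X$ to $Y$ is a vertex sequence $(X=v_0,\dots,v_\ell=Y)$ with consecutive vertices adjacent and $d(X,Y)=\ell$. For $G\le\mathrm{Aut}\,\Gamma$, $\Gamma$ is $G$-distance-transitive if $G$ is transitive on ordered pairs of vertices at distance $i$ for each $i$, and $G$-geodesic-transitive if $G$ is transitive on the set of geodesics of length $\ell$ for each $\ell\ge1$. The intersection array: for any $X,Y$ at distance $i$, exactly $c_i$ neighbours of $X$ lie at distance $i-1$ from $Y$ and exactly $b_i$ at distance $i+1$ from $Y$. *)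

(* Defs.v *)
From mathcomp Require Import all_boot all_order all_fingroup.
Set Implicit Arguments. Unset Strict Implicit. Unset Printing Implicit Defensive.

Section Graphs.
Variables (V : finType) (e : rel V).

Definition simple_graph := symmetric e /\ irreflexive e.
Definition connected_graph := forall x y : V, connect e x y.

Definition walkn (n : nat) (x y : V) : bool :=
  [exists p : n.-tuple V, path e x p && (last x p == y)].

(* distance: least n with a walk of length n from x to y; in a connected
   graph such an n is < #|V|, so searching [0, #|V|) is exact. *)
Definition dist (x y : V) : nat :=
  find (fun n => walkn n x y) (iota 0 #|V|).

Definition diameter : nat := \max_(x : V) \max_(y : V) dist x y.

Definition geodesic (s : seq V) : bool :=
  if s is x :: p then path e x p && (size p == dist x (last x p)) else false.

Definition geodesics_between (x y : V) : {set (dist x y).+1.-tuple V} :=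
  [set t : (dist x y).+1.-tuple V |
     geodesic t && (head x t == x) && (last x t == y)].

Definition acts_by_automorphisms (G : {group {perm V}}) :=
  forall g, g \in G -> forall x y, e (g x) (g y) = e x y.

Definition distance_transitive (G : {group {perm V}}) :=
  forall x y x' y', dist x y = dist x' y' ->
    exists2 g, g \in G & g x = x' /\ g y = y'.

(* transitive on geodesics of each length l >= 1 (i.e. l+1 >= 2 vertices) *)
Definition geodesic_transitive (G : {group {perm V}}) :=
  forall s t : seq V, geodesic s -> geodesic t -> size s = size t ->
    2 <= size s -> exists2 g, g \in G & map g s = t.

Definition stab_transitive_on_geodesics (G : {group {perm V}}) (x y : V) :=
  forall s t, s \in geodesics_between x y -> t \in geodesics_between x y ->
    exists2 g, g \in G & [/\ g x = x, g y = y & map g s = t].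

Definition intersection_numbers_c (c : nat -> nat) :=
  forall i x y, 1 <= i <= diameter -> dist x y = i ->
    #|[set z | e x z && (dist z y == i.-1)]| = c i.

End Graphs.

(* Main.v *)
Require Import Defs.
From mathcomp Require Import all_boot all_order all_fingroup zify.
Set Implicit Arguments. Unset Strict Implicit. Unset Printing Implicit Defensive.

Lemma walkn_intro (V : finType) (e : rel V) n x y (p : seq V) :
  size p = n -> path e x p -> last x p = y -> walkn e n x y.
Proof. move=> <- Hp Hl; apply/existsP; exists (in_tuple p); by rewrite Hp Hl /=. Qed.

Lemma walkn_elim (V : finType) (e : rel V) n x y :
  walkn e n x y -> exists p : seq V, [/\ size p = n, path e x p & last x p = y].
Proof. case/existsP=> p /andP[Hp /eqP Hl]; exists p; by rewrite size_tuple. Qed.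

Lemma walk_dist (V : finType) (e : rel V) n x y : walkn e n x y -> dist e x y <= n.
Proof.
move=> W; rewrite leqNgt; apply/negP => H.
have Hs : dist e x y <= #|V| by rewrite /dist -{2}(size_iota 0 #|V|) find_size.
have := before_find 0 H; rewrite nth_iota ?add0n ?W //.
exact: leq_trans H Hs.
Qed.

Lemma dist_walk (V : finType) (e : rel V) x y : connected_graph e -> walkn e (dist e x y) x y.
Proof.
move=> Hc.
have Hh : has (fun n => walkn e n x y) (iota 0 #|V|).
  case/connectP: (Hc x y) => p Hp ->.
  case/shortenP: Hp => p' Hp' Hu _.
  apply/hasP; exists (size p').
    rewrite mem_iota add0n /=.
    have := max_card [pred z in x :: p']; rewrite (card_uniqP Hu) /=; done.
  exact: walkn_intro Hp' _.
have := nth_find 0 Hh; rewrite has_find size_iota in Hh.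
by rewrite nth_iota.
Qed.

Lemma walkn_cat (V : finType) (e : rel V) a b x y z :
  walkn e a x y -> walkn e b y z -> walkn e (a + b) x z.
Proof.
case/walkn_elim=> p [Hs Hp Hl]; case/walkn_elim=> q [Hs' Hq Hl'].
apply: (walkn_intro (p := p ++ q)); first by rewrite size_cat Hs Hs'.
  by rewrite cat_path Hp Hl Hq.
by rewrite last_cat Hl.
Qed.

Lemma dist_diam (V : finType) (e : rel V) x y : dist e x y <= diameter e.
Proof.
rewrite /diameter.
apply: (leq_trans _ (bigop.leq_bigmax x)) => /=.
exact: (bigop.leq_bigmax y).
Qed.

Lemma path_mapg (V : finType) (e : rel V) (g : {perm V}) x p :
  (forall x y, e (g x) (g y) = e x y) -> path e (g x) (map g p) = path e x p.
Proof. move=> Hg; elim: p x => [|z p IH] x //=; by rewrite Hg IH. Qed.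

Lemma walkn_map (V : finType) (e : rel V) (g : {perm V}) n x y :
  (forall x y, e (g x) (g y) = e x y) -> walkn e n x y -> walkn e n (g x) (g y).
Proof.
move=> Hg; case/walkn_elim=> p [Hs Hp Hl].
apply: (walkn_intro (p := map g p)); by rewrite ?size_map ?path_mapg ?last_map ?Hl.
Qed.

Lemma dist_map (V : finType) (e : rel V) (G : {group {perm V}}) g x y :
  acts_by_automorphisms e G -> g \in G -> dist e (g x) (g y) = dist e x y.
Proof.
move=> HA Hg; rewrite /dist; apply: eq_find => n; apply/idP/idP.
  have Hgi : (g^-1)%g \in G by rewrite groupV.
  move/(walkn_map (HA _ Hgi)); by rewrite !permK.
exact: walkn_map (HA _ Hg).
Qed.

Lemma geodesic_map (V : finType) (e : rel V) (G : {group {perm V}}) g s :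
  acts_by_automorphisms e G -> g \in G -> geodesic e (map g s) = geodesic e s.
Proof.
move=> HA Hg; case: s => [|x p] //=.
have Hg' := HA g Hg.
by rewrite path_mapg // last_map (dist_map _ _ HA Hg) size_map.
Qed.

Definition Wset (V : finType) (e : rel V) n x y : {set n.-tuple V} :=
  [set p : n.-tuple V | path e x p && (last x p == y)].

Lemma cons_inj (V : finType) n (z : V) : injective (fun q : n.-tuple V => [tuple of z :: q]).
Proof. move=> q1 q2 /(congr1 val) /= [] /val_inj; done. Qed.

Lemma count_walks (V : finType) (e : rel V) (c : nat -> nat) :
  connected_graph e -> intersection_numbers_c e c ->
  forall n x y, dist e x y = n -> n <= diameter e ->
  #|Wset e n x y| = \prod_(1 <= i < n.+1) c i.
Proof.
move=> Hc Hi; elim=> [|n IH] x y Hd Hn.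
  have /walkn_elim [p [Hs _ Hl]] := dist_walk x y Hc.
  rewrite Hd in Hs; case: p Hs Hl => //= _ <-.
  rewrite big_geq //.
  have -> : Wset e 0 x x = setT.
    by apply/setP => t; rewrite !inE tuple0 /= eqxx.
  by rewrite cardsT card_tuple expn0.
have Hin : forall z, \sum_(p | (p \in Wset e n.+1 x y) && (thead p == z)) 1 =
   if e x z && (dist e z y == n) then \prod_(1 <= i < n.+1) c i else 0.
  move=> z; rewrite sum1dep_card.
  have -> : [set p | (p \in Wset e n.+1 x y) && (thead p == z)] =
     if e x z then (fun q : n.-tuple V => [tuple of z :: q]) @: Wset e n z y else set0.
    apply/setP => t; case/tupleP: t => z' q.
    rewrite !inE theadE /=.
    case Exz: (e x z).
      case: (eqVneq z' z) => [->|Hne]; rewrite ?andbT.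
        by rewrite mem_imset ?inE ?Exz //; apply: cons_inj.
      rewrite andbF; apply/esym/negP => /imsetP [q' _ /(congr1 val) /= [] Hz _].
      by rewrite Hz eqxx in Hne.
    rewrite inE; case: (eqVneq z' z) => [->|]; by rewrite ?Exz ?andbF.
  case Exz: (e x z); last by rewrite cards0.
  rewrite card_imset; last by apply: cons_inj.
  case: (eqVneq (dist e z y) n) => [Hzy|Hne] /=.
    by apply: IH => //; apply: ltnW.
  suff -> : Wset e n z y = set0 by rewrite cards0.
  apply/setP => q; rewrite !inE; apply/negP => /andP [Hq /eqP Hl].
  have Hw : walkn e n z y by apply: (walkn_intro (p := q)); rewrite ?size_tuple.
  have H1 := walk_dist Hw.
  have Hzw := dist_walk z y Hc.
  have Hxz : walkn e 1 x z by apply: (walkn_intro (p := [:: z])); rewrite //= Exz.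
  have := walk_dist (walkn_cat Hxz Hzw); rewrite Hd add1n ltnS => H2.
  by move: Hne; rewrite eqn_leq H1 H2.
rewrite -sum1_card (partition_big (fun p : n.+1.-tuple V => thead p) predT) //=.
rewrite (eq_bigr _ (fun z _ => Hin z)) -big_mkcond /= sum_nat_cond_const.
rewrite [in RHS]big_nat_recr //= [in RHS]mulnC; congr (_ * _).
have := Hi n.+1 x y; rewrite Hn Hd /=; move/(_ isT erefl) => <-.
done.
Qed.

Lemma geo_in (V : finType) (e : rel V) X Y (s : (dist e X Y).+1.-tuple V) :
  s \in geodesics_between e X Y ->
  exists p, [/\ tval s = X :: p, last X p = Y, size p = dist e X Y & path e X p].
Proof.
rewrite inE; case/tupleP: s => x0 p /= /andP [/andP [/andP [Hp _] /eqP Hx] /eqP Hl].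
subst x0; exists p; by rewrite size_tuple.
Qed.

Lemma extend (V : finType) (e : rel V) (G : {group {perm V}}) X Y x0 ps :
  connected_graph e -> acts_by_automorphisms e G -> distance_transitive e G ->
  dist e X Y = diameter e -> geodesic e (x0 :: ps) ->
  exists2 h, h \in G & exists r, [/\ h x0 = X, path e X (map h ps ++ r),
     last X (map h ps ++ r) = Y & size (map h ps ++ r) = dist e X Y].
Proof.
move=> Hc HA HD Hdiam /= /andP [Hps /eqP Hl].
set xl := last x0 ps in Hl.
have Hld : size ps <= dist e X Y by rewrite Hdiam Hl dist_diam.
have /walkn_elim [p [Hsp Hpp Hlp]] := dist_walk X Y Hc.
set l := size ps in Hl Hld.
have Hp12 : p = take l p ++ drop l p by rewrite cat_take_drop.
set v := last X (take l p).
have Hvl : dist e X v = l.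
  apply/eqP; rewrite eqn_leq; apply/andP; split.
    apply: walk_dist; apply: (walkn_intro (p := take l p)) => //.
      by rewrite size_take Hsp; case: ltngtP Hld.
    by move: Hpp; rewrite {1}Hp12 cat_path => /andP [].
  have W2 : walkn e (dist e X Y - l) v Y.
    apply: (walkn_intro (p := drop l p)); first by rewrite size_drop Hsp.
      by move: Hpp; rewrite {1}Hp12 cat_path => /andP [].
    by rewrite -Hlp {2}Hp12 last_cat.
  have := walk_dist (walkn_cat (dist_walk X v Hc) W2).
  move: Hld; lia.
have [g Hg [HgX Hgv]] := HD X v x0 xl (etrans Hvl Hl).
exists (g^-1)%g; first by rewrite groupV.
have HgiA := HA _ (groupVr Hg).
have Hx0 : (g^-1)%g x0 = X by rewrite -HgX permK.
have Hxl : (g^-1)%g xl = v by rewrite -Hgv permK.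
have Hmv : last X (map (g^-1)%g ps) = v by rewrite -Hx0 last_map Hxl.
exists (drop l p); split => //.
- rewrite cat_path -{1}Hx0 path_mapg // Hmv Hps /=.
  by move: Hpp; rewrite {1}Hp12 cat_path => /andP [].
- by rewrite last_cat Hmv -Hlp {2}Hp12 last_cat.
- rewrite size_cat size_map size_drop Hsp; move: Hld; lia.
Qed.

Theorem lemma3p1 (V : finType) (e : rel V) (G : {group {perm V}})
  (c : nat -> nat) (d : nat) (X Y : V) :
  simple_graph e -> connected_graph e ->
  acts_by_automorphisms e G -> distance_transitive e G ->
  d = diameter e -> intersection_numbers_c e c ->
  dist e X Y = d ->
  (geodesic_transitive e G <-> stab_transitive_on_geodesics e G X Y) /\
  #|geodesics_between e X Y| = \prod_(1 <= i < d.+1) c i.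
Proof.
move=> Hs Hc HA HD Hdiam Hi HXY.
split; last first.
  have -> : geodesics_between e X Y =
      (fun p : (dist e X Y).-tuple V => [tuple of X :: p]) @: Wset e (dist e X Y) X Y.
    apply/setP => t; case/tupleP: t => x0 p; rewrite inE /=.
    case: (eqVneq x0 X) => [->|Hne].
      rewrite mem_imset; last exact: cons_inj.
      rewrite inE size_tuple.
      by case: (eqVneq (last X p) Y) => [->|]; rewrite ?eqxx ?andbT ?andbF.
    rewrite andbF andFb; apply/esym/imsetP => [[q _ /(congr1 val) /= [] Hq _]].
    by rewrite Hq eqxx in Hne.
  rewrite card_imset; last exact: cons_inj.
  rewrite (count_walks Hc Hi (x:=X) (y:=Y) (erefl _) (dist_diam _ _ _)).
  by rewrite HXY.
split.
  move=> GT s t Gs Gt.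
  have [p [Ep Lp Sp Pp]] := geo_in Gs.
  have [q [Eq Lq Sq Pq]] := geo_in Gt.
  rewrite Ep Eq.
  case: (posnP (dist e X Y)) => Hd.
    have -> : p = [::] by apply/size0nil; rewrite Sp Hd.
    have -> : q = [::] by apply/size0nil; rewrite Sq Hd.
    by exists 1%g; [exact: group1 | rewrite /= !perm1].
  have Gs' : geodesic e (X :: p) by rewrite /= Pp Lp Sp eqxx.
  have Gt' : geodesic e (X :: q) by rewrite /= Pq Lq Sq eqxx.
  have E1 : size (X :: p) = size (X :: q) by rewrite /= Sp Sq.
  have E2 : 2 <= size (X :: p) by rewrite /= Sp.
  have [g Hg] := GT _ _ Gs' Gt' E1 E2.
  move=> /= [HgX Hm].
  exists g => //; split => //.
    by rewrite -{1}Lp -Lq -Hm -{2}HgX last_map.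
  by rewrite HgX Hm.
move=> ST s t Gs Gt Hsz H2.
case: s Gs Hsz H2 => [|x0 ps] // Gs; case: t Gt => [|y0 pt] // Gt [Hsz] _.
have HXd : dist e X Y = diameter e by rewrite HXY.
have [h1 Hh1 [r1 [H1x P1 L1 S1]]] := extend Hc HA HD HXd Gs.
have [h2 Hh2 [r2 [H2x P2 L2 S2]]] := extend Hc HA HD HXd Gt.
have S1' : size (X :: map h1 ps ++ r1) == (dist e X Y).+1 by rewrite /= S1.
have S2' : size (X :: map h2 pt ++ r2) == (dist e X Y).+1 by rewrite /= S2.
have M1 : Tuple S1' \in geodesics_between e X Y.
  by rewrite inE /= P1 L1 S1 !eqxx.
have M2 : Tuple S2' \in geodesics_between e X Y.
  by rewrite inE /= P2 L2 S2 !eqxx.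
have [k Hk [HkX HkY /= [Hm]]] := ST _ _ M1 M2.
rewrite map_cat => /eqP; rewrite eqseq_cat; last by rewrite !size_map Hsz.
case/andP => /eqP Hm' _.
exists (h1 * k * h2^-1)%g; first by rewrite !groupM ?groupV.
rewrite /= !permM H1x HkX -H2x permK; congr (_ :: _).
rewrite -[pt](mapK (permK h2)) -Hm' -!map_comp.
by apply: eq_map => z /=; rewrite !permM.
Qed.
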